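(* For every integer $q>2$, $\mathrm{Inn}(Q_2(T_{2,q}\cup A))\cong D_{2q/\gcd(2,q)}$ and $\mathrm{Trans}(Q_2(T_{2,q}\cup A))\cong D_q$.
   Context: A quandle is a set $Q$ with binary operations $\rhd$, $\rhd^{-1}$ satisfying $x\rhd x=x$, $(x\rhd y)\rhd^{-1}y=x=(x\rhd^{-1}y)\rhd y$, and $(x\rhd y)\rhd z=(x\rhd z)\rhd(y\rhd z)$; write $x^y=x\rhd y$. For $x\in Q$ the point symmetry $S_x:Q\to Q$ is $S_x(y)=y\rhd x$. $\mathrm{Inn}(Q)$ is the subgroup of the automorphism group generated by all $S_x$, and $\mathrm{Trans}(Q)$ is the subgroup generated by all products $S_xS_y^{-1}$. A quandle is involutory if $(x^y)^y=x$ for all $x,y$. The fundamental quandle of a link is presented from a diagram by one generator per arc and a relation $x_i=x_k^{x_j}$ at each crossing (over-arc $x_j$); the involutory quandle $Q_2(L)$ is its quotient by the relations $x^{yy}=x$ for all pairs of generators, and it is independent of orientation. $T_{2,q}$ is the $(2,q)$ torus link (two strands with $q$ right-handed half twists) lying on an unknotted torus $F\subset S^3$; $T_{2,q}\cup A$ is obtained by adjoining an axis $A$, the core of the solid torus bounded by $F$ around which $T_{2,q}$ winds twice, so that $A$ has linking number $2$ with $T_{2,q}$. $D_m$ denotes the dihedral group of order $2m$. *)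

(* Defs.v *)
From mathcomp Require Import all_boot all_fingroup all_solvable.
Set Implicit Arguments. Unset Strict Implicit. Unset Printing Implicit Defensive.

Record quandle := Quandle {
  qcarrier :> Type;
  qop : qcarrier -> qcarrier -> qcarrier;
  qopinv : qcarrier -> qcarrier -> qcarrier;
  qidem : forall x, qop x x = x;
  qinvl : forall x y, qopinv (qop x y) y = x;
  qinvr : forall x y, qop (qopinv x y) y = x;
  qdistr : forall x y z, qop (qop x y) z = qop (qop x z) (qop y z)
}.

Definition involutory (Q : quandle) : Prop :=
  forall x y : Q, qop (qop x y) y = x.

Definition quandle_hom (Q X : quandle) (f : Q -> X) : Prop :=
  forall x y : Q, f (qop x y) = qop (f x) (f y).

Definition S (Q : quandle) (x : Q) : Q -> Q := fun y => qop y x.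
Definition Sinv (Q : quandle) (x : Q) : Q -> Q := fun y => qopinv y x.

(* Inn(Q): the subgroup of Aut(Q) generated by all S_x, i.e. all finite
   products of the S_x and their inverses (as maps Q -> Q). *)
Inductive inn_elt (Q : quandle) : (Q -> Q) -> Prop :=
  | inn_id : inn_elt (fun y => y)
  | inn_S (x : Q) (g : Q -> Q) : inn_elt g -> inn_elt (S x \o g)
  | inn_Sinv (x : Q) (g : Q -> Q) : inn_elt g -> inn_elt (Sinv x \o g).

(* Trans(Q): subgroup generated by all S_x S_y^{-1}, i.e. finite products of
   the S_x S_y^{-1} and their inverses S_y S_x^{-1}. *)
Inductive trans_elt (Q : quandle) : (Q -> Q) -> Prop :=
  | trans_id : trans_elt (fun y => y)
  | trans_gen (x y : Q) (g : Q -> Q) :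
      trans_elt g -> trans_elt (S x \o Sinv y \o g)
  | trans_geninv (x y : Q) (g : Q -> Q) :
      trans_elt g -> trans_elt (S y \o Sinv x \o g).

(* The subgroup {f | P f} of the permutation group of Q (group law =
   composition, equality = pointwise) is isomorphic to the finite group G. *)
Definition perm_subgroup_isog (Q : quandle) (P : (Q -> Q) -> Prop)
    (gT : finGroupType) : Prop :=
  exists phi : gT -> (Q -> Q),
    [/\ forall g, P (phi g),
        forall g h, phi (g * h)%g =1 phi g \o phi h,
        forall g h, phi g =1 phi h -> g = h
      & forall f, P f -> exists g, phi g =1 f].

(* The diagram of T_{2,q} u A used: T_{2,q} is the closure of the
   2-braid sigma_1^q, A is the braid axis (a ring around the two strands).
   Arcs: strand arcs c_0, ..., c_{q+1} and axis arcs r, r'.  Crossings: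
     braid:   c_{j+2} = c_j |> c_{j+1}    (0 <= j < q)
     ring (front, strands under r):  c_0 = c_q |> r,  c_1 = c_{q+1} |> r
     ring (back, ring under strands): r' = r |> c_q,  r = r' |> c_{q+1}. *)
Definition T2qA_rels (q : nat) (X : quandle) (c : nat -> X) (r r' : X) : Prop :=
  [/\ forall j, j < q -> c j.+2 = qop (c j) (c j.+1),
      c 0 = qop (c q) r,
      c 1 = qop (c q.+1) r,
      r' = qop r (c q)
    & r = qop r' (c q.+1)].

(* (Q, c, r, r') is the involutory quandle Q_2(T_{2,q} u A): the involutory
   quandle presented by the generators c_0..c_{q+1}, r, r' and the above
   relations, characterized by its universal property. *)
Definition is_Q2_T2qA (q : nat) (Q : quandle) (c : nat -> Q) (r r' : Q) : Prop :=
  [/\ involutory Q,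
      T2qA_rels q c r r'
    & forall (X : quandle) (d : nat -> X) (s s' : X),
        involutory X -> T2qA_rels q d s s' ->
        (exists f : Q -> X,
           [/\ quandle_hom f, forall j, j < q.+2 -> f (c j) = d j,
               f r = s & f r' = s'])
        /\ (forall f g : Q -> X,
              quandle_hom f -> quandle_hom g ->
              (forall j, j < q.+2 -> f (c j) = g (c j)) ->
              f r = g r -> f r' = g r' -> f =1 g)].

(* Main.v *)
Require Import Defs.
From mathcomp Require Import all_boot all_fingroup all_solvable all_algebra.
From mathcomp Require Import ring zify.
From Stdlib Require Import FunctionalExtensionality.
Set Implicit Arguments. Unset Strict Implicit. Unset Printing Implicit Defensive.
Import GRing.Theory.


Lemma iter_mod (T : Type) (n : nat) (f : T -> T) :
  (forall z, iter n f z = z) -> forall a z, iter a f z = iter (a %% n) f z.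
Proof.
move=> Hn a z; rewrite {1}(divn_eq a n) iterD.
elim: (a %/ n) => [|k IH] //=; by rewrite mulSn iterD Hn IH.
Qed.

Section DihedralRealize.
Variables (n : nat) (T : quandle) (P : (T -> T) -> Prop) (R F : T -> T).
Hypotheses (n1 : 1 < n) (Rn : forall z, iter n R z = z) (F2 : forall z, F (F z) = z)
  (FR : forall z, F (R z) = iter n.-1 R (F z))
  (Dist : forall i j k l, i < n -> k < n -> j < 2 -> l < 2 ->
      (forall z, iter i R (iter j F z) = iter k R (iter l F z)) -> i = k /\ j = l)
  (Pin : forall i j, P (fun z => iter i R (iter j F z)))
  (Pall : forall f, P f -> exists i j, f =1 (fun z => iter i R (iter j F z))).

Lemma FRc c z : F (iter c R z) = iter (c * n.-1) R (F z).
Proof.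
elim: c z => [|c IH] z //=; by rewrite FR IH mulSn iterD.
Qed.

Lemma dihedral_realize : perm_subgroup_isog P ('D_(2 * n)).
Proof.
have := isoGrp_hom (Grp_dihedral n1); rewrite mul2n.
case/existsP=> -[x y] /= /eqP[defG xn y2 xy].
have cardD := card_dihedral n1.
set gT := 'D_(n.*2) in x y defG xn y2 xy cardD *.
have nxy : (<[y]> \subset 'N(<[x]>))%g by rewrite norms_cycle xy groupV cycle_id.
have dec : forall g : gT, exists a b, g = (x ^+ a * y ^+ b)%g.
  move=> g; have : g \in [set: gT] by rewrite inE.
  rewrite -defG norm_joinEr //; case/mulsgP=> u v /cycleP[a ->] /cycleP[b ->] ->.
  by exists a, b.
pose e (p : 'I_n * 'I_2) : gT := (x ^+ p.1 * y ^+ p.2)%g.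
have einj : injective e.
  have: #|[set e p | p in [set: 'I_n * 'I_2]]| == #|[set: 'I_n * 'I_2]|.
    rewrite cardsT card_prod !card_ord.
    suff -> : [set e p | p in [set: 'I_n * 'I_2]] = [set: gT] by rewrite cardD -mul2n mulnC.
    apply/setP=> g; rewrite !inE; have [a [b ->]] := dec g.
    apply/imsetP; exists (Ordinal (ltn_pmod a (ltnW n1)), Ordinal (ltn_pmod b (isT : 0 < 2))) => //.
    by rewrite /e /= !expg_mod.
  by move/imset_injP=> H p1 p2 Hp; apply: H; rewrite ?inE.
have uniq : forall i j k l, i < n -> k < n -> j < 2 -> l < 2 ->
    (x ^+ i * y ^+ j = x ^+ k * y ^+ l)%g -> i = k /\ j = l.
  move=> i j k l Hi Hk Hj Hl H.
  have := einj (Ordinal Hi, Ordinal Hj) (Ordinal Hk, Ordinal Hl) H.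
  by case.
have decb : forall g : gT, exists p : nat * nat, g == (x ^+ p.1 * y ^+ p.2)%g.
  by move=> g; have [a [b ->]] := dec g; exists (a, b).
pose phi (g : gT) : T -> T := let p := xchoose (decb g) in
  fun z => iter p.1 R (iter p.2 F z).
have W : forall g a b, g = (x ^+ a * y ^+ b)%g ->
    phi g =1 (fun z => iter a R (iter b F z)).
  move=> g a b Hg z; rewrite /phi.
  have /eqP := xchooseP (decb g); set p := xchoose _ => Hp.
  have F2' : forall z, iter 2 F z = z by move=> w; exact: F2.
  have [E1 E2] : p.1 %% n = a %% n /\ p.2 %% 2 = b %% 2.
    apply: uniq; rewrite ?ltn_pmod ?(ltnW n1) //.
    by rewrite !expg_mod // -Hp.
  by rewrite (iter_mod Rn p.1) (iter_mod F2' p.2) E1 E2 -(iter_mod F2') -(iter_mod Rn).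
have decr : forall g : gT, exists a b, [/\ a < n, b < 2 & g = (x ^+ a * y ^+ b)%g].
  move=> g; have [a [b ->]] := dec g; exists (a %% n), (b %% 2).
  by rewrite !expg_mod // ltn_pmod ?(ltnW n1) ?ltn_pmod.
have xinv : (x^-1 = x ^+ n.-1)%g.
  apply: mulg1_eq; by rewrite -expgS prednK ?(ltnW n1).
have yinv : (y^-1 = y)%g by apply: mulg1_eq; rewrite -y2 expgS expg1.
have yx : forall c, (y * x ^+ c = x ^+ (c * n.-1) * y)%g.
  move=> c; rewrite conjgCV yinv conjXg xy xinv -expgM mulnC //.
exists phi; split.
- by move=> g; exact: Pin.
- move=> g h z.
  have [a [b [_ Hb ->]]] := decr g; have [c [d [_ _ ->]]] := decr h.
  rewrite /comp (W _ a b erefl) (W _ c d erefl).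
  case: b Hb => [|[|//]] _.
  + rewrite expg0 mulg1 mulgA -expgD (W _ (a + c) d erefl) /=.
    by rewrite iterD.
  + rewrite expg1 (W _ (a + c * n.-1) d.+1); last first.
      by rewrite expgD -!mulgA (mulgA y) yx -!mulgA expgS.
    by rewrite iterD /= FRc.
- move=> g h Hgh.
  have [a [b [Ha Hb Eg]]] := decr g; have [c [d [Hc Hd Eh]]] := decr h.
  have [E1 E2] : a = c /\ b = d.
    apply: Dist => // z; by rewrite -(W _ a b Eg) -(W _ c d Eh).
  by rewrite Eg Eh E1 E2.
- move=> f /Pall [i [j Hf]]; exists (x ^+ i * y ^+ j)%g => z.
  by rewrite (W _ i j erefl) Hf.
Qed.
End DihedralRealize.


Section Transport.
Variables (A B : quandle) (al : A -> B) (be : B -> A).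
Hypotheses (hal : quandle_hom al) (ab : forall x, al (be x) = x) (ba : forall x, be (al x) = x).

Lemma hom_opinv x y : al (qopinv x y) = qopinv (al x) (al y).
Proof. by rewrite -{2}(qinvr x y) hal qinvl. Qed.

Lemma inn_transport h : inn_elt h -> inn_elt (al \o h \o be).
Proof.
elim=> [|x g _ IH|x g _ IH].
- have -> : al \o (fun y => y) \o be = (fun y => y).
    by apply: functional_extensionality => z /=; rewrite ab.
  exact: inn_id.
- have -> : al \o (S x \o g) \o be = S (al x) \o (al \o g \o be).
    by apply: functional_extensionality => z /=; rewrite /S hal.
  exact: inn_S.
- have -> : al \o (Sinv x \o g) \o be = Sinv (al x) \o (al \o g \o be).
    by apply: functional_extensionality => z /=; rewrite /Sinv hom_opinv.
  exact: inn_Sinv.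
Qed.

Lemma trans_transport h : trans_elt h -> trans_elt (al \o h \o be).
Proof.
elim=> [|x y g _ IH|x y g _ IH].
- have -> : al \o (fun y => y) \o be = (fun y => y).
    by apply: functional_extensionality => z /=; rewrite ab.
  exact: trans_id.
- have -> : al \o (S x \o Sinv y \o g) \o be = S (al x) \o Sinv (al y) \o (al \o g \o be).
    by apply: functional_extensionality => z /=; rewrite /S /Sinv hal hom_opinv.
  exact: trans_gen.
- have -> : al \o (S y \o Sinv x \o g) \o be = S (al y) \o Sinv (al x) \o (al \o g \o be).
    by apply: functional_extensionality => z /=; rewrite /S /Sinv hal hom_opinv.
  exact: trans_geninv.
Qed.

Lemma isog_transport (PA : (A -> A) -> Prop) (PB : (B -> B) -> Prop) (gT : finGroupType) :
  (forall h, PB h -> PA (be \o h \o al)) -> (forall h, PA h -> PB (al \o h \o be)) ->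
  perm_subgroup_isog PB gT -> perm_subgroup_isog PA gT.
Proof.
move=> HB HA [phi [P1 P2 P3 P4]].
exists (fun g => be \o phi g \o al); split.
- by move=> g; apply: HB.
- by move=> g h z /=; rewrite ab P2.
- move=> g h E; apply: P3 => w.
  by have := congr1 al (E (be w)); rewrite /= !ab.
- move=> f /HA /P4 [g Hg]; exists g => z /=.
  by rewrite Hg /= !ba.
Qed.
End Transport.


Section Model.
Variable q : nat.
Hypothesis q0 : (0 < q)%N.
Local Open Scope ring_scope.
Local Notation ZZ := 'Z_(2*q).

Lemma p1 : (1 < 2 * q)%N.
Proof. by rewrite mul2n -addnn (leq_add q0 q0). Qed.

Definition hh : ZZ := q%:R.
Lemma hh2 : hh + hh = 0.
Proof. by rewrite /hh -natrD addnn -mul2n pchar_Zp // p1. Qed.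
Lemma hhN : - hh = hh.
Proof. by rewrite -[LHS]add0r -hh2 addrK. Qed.

Definition Xc := (ZZ + bool)%type.
Definition xop (x y : Xc) : Xc :=
  match x, y with
  | inl a, inl b => inl (b *+ 2 - a)
  | inl a, inr _ => inl (a + hh)
  | inr s, inl _ => inr (~~ s)
  | inr s, inr _ => inr s
  end.

Lemma xidem x : xop x x = x.
Proof. case: x => [a|s] //=; congr inl; ring. Qed.

Lemma xinv x y : xop (xop x y) y = x.
Proof.
case: x => [a|s]; case: y => [b|t] //=; try congr inl.
- ring.
- by rewrite -addrA hh2 addr0.
- by rewrite negbK.
Qed.

Lemma xdistr x y z : xop (xop x y) z = xop (xop x z) (xop y z).
Proof.
case: x => [a|s]; case: y => [b|t]; case: z => [c|u] //=; try congr inl.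
- ring.
- ring.
- rewrite opprD hhN; ring.
Qed.

Definition Xq : quandle := @Quandle Xc xop xop xidem xinv xinv xdistr.

Lemma Xinvol : involutory Xq.
Proof. exact: xinv. Qed.

Definition dX (j : nat) : Xq := inl (j%:R).

Lemma Xrels : T2qA_rels q dX (inr false : Xq) (inr true).
Proof.
split => //.
- move=> j _; rewrite /dX /=; congr inl.
  rewrite -[j.+2]addn2 -[j.+1]addn1 !natrD; ring.
- by rewrite /dX /= -/hh hh2.
- rewrite /dX /=; congr inl.
  by rewrite -[q.+1]addn1 natrD -/hh addrAC hh2 add0r.
Qed.
End Model.


Lemma ind2 (P : nat -> Prop) : P 0 -> P 1 -> (forall j, P j -> P j.+1 -> P j.+2) -> forall j, P j.
Proof.
move=> H0 H1 HS j; suff : P j /\ P j.+1 by case.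
elim: j => [|j [IH1 IH2]]; split => //; exact: HS.
Qed.

Section QSide.
Variables (q : nat) (Q : quandle) (c : nat -> Q) (r r' : Q).
Hypotheses (q0 : (0 < q)%N) (Hinv : involutory Q) (Hrel : T2qA_rels q c r r').
Local Notation ZZ := 'Z_(2*q).

Lemma F3 (a b y : Q) : qop a (qop b y) = qop (qop (qop a y) b) y.
Proof. by rewrite qdistr Hinv. Qed.

Lemma qcancel (x z y : Q) : qop x y = qop z y -> x = z.
Proof. by move=> H; rewrite -(Hinv x y) H Hinv. Qed.

Fixpoint ep (j : nat) : Q * Q :=
  match j with 0 => (c 0, c 1) | j'.+1 => ((ep j').2, qop (ep j').1 (ep j').2) end.
Definition e j := (ep j).1.
Lemma eS2 j : e j.+2 = qop (e j) (e j.+1).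
Proof. by []. Qed.

Lemma ec j : (j < q.+2)%N -> e j = c j.
Proof.
case: Hrel => Hc _ _ _ _.
elim/ind2: j => // j IH1 IH2 Hj.
by rewrite eS2 IH1 ?IH2 ?Hc //; lia.
Qed.

Lemma e_rho j : qop (e (q + j)) r = e j.
Proof.
case: Hrel => _ Hc0 Hc1 _ _.
elim/ind2: j => [||j IH1 IH2].
- by rewrite addn0 ec // Hc0.
- by rewrite addn1 ec // Hc1.
- by rewrite !addnS eS2 qdistr IH1 -addnS IH2.
Qed.

Lemma e_rho' j : qop (e j) r = e (q + j).
Proof. by rewrite -e_rho Hinv. Qed.

Lemma e_per j : e (2 * q + j) = e j.
Proof.
by apply: (@qcancel _ _ r); rewrite mul2n -addnn -addnA e_rho e_rho'.
Qed.

Lemma e_mod j : e (j %% (2 * q)) = e j.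
Proof.
rewrite {2}(divn_eq j (2 * q)); elim: (j %/ (2 * q)) => [|k IH].
  by rewrite mul0n add0n.
by rewrite mulSn -addnA e_per IH.
Qed.

Definition E (k : ZZ) : Q := e k.
Local Open Scope ring_scope.

Lemma E_nat j : E (j%:R) = e j.
Proof. by rewrite /E val_Zp_nat ?p1 // e_mod. Qed.

Local Close Scope ring_scope.
Lemma Bdih n : forall x, qop (e (x + n + n)) (e (x + n)) = e x.
Proof.
elim/ind2: n => [||n IHn IHn1] x.
- by rewrite !addn0 qidem.
- by rewrite !addn1 eS2 Hinv.
- have -> : x + n.+2 + n.+2 = (x + n.+1 + n.+1).+2 by lia.
  rewrite eS2 qdistr.
  have -> : x + n.+1 + n.+1 = x.+2 + n + n by lia.
  have -> : x + n.+2 = x.+2 + n by lia.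
  rewrite IHn.
  have -> : (x.+2 + n + n).+1 = x.+1 + n.+1 + n.+1 by lia.
  have -> : x.+2 + n = x.+1 + n.+1 by lia.
  by rewrite IHn1 eS2 Hinv.
Qed.

Lemma Pf n x : qop (e x) (e (x + n)) = e (x + n + n).
Proof. by apply: (@qcancel _ _ (e (x + n))); rewrite Hinv Bdih. Qed.

Local Open Scope ring_scope.
Lemma E_dih (a b : ZZ) : qop (E a) (E b) = E (b *+ 2 - a).
Proof.
pose d := nat_of_ord (b - a).
have Hd : (d%:R : ZZ) = b - a by apply: natr_Zp.
have Hb : b = (a + d)%N%:R.
  by rewrite natrD Hd natr_Zp addrC subrK.
have Hc : b *+ 2 - a = (a + d + d)%N%:R.
  rewrite !natrD Hd natr_Zp; ring.
by rewrite Hc {1}Hb !E_nat /E Pf.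
Qed.

Lemma E_r (a : ZZ) : qop (E a) r = E (a + hh q).
Proof.
by rewrite /E e_rho' -[in RHS](natr_Zp a) /hh -natrD -/(E _) E_nat addnC.
Qed.

Lemma Uconst j z : qop (qop z (e j.+1)) (e j.+2) = qop (qop z (e j)) (e j.+1).
Proof. by rewrite eS2 F3 Hinv. Qed.

Lemma Ur j : qop (qop r (e j)) (e j.+1) = r.
Proof.
have H : forall k, qop (qop r (e k)) (e k.+1) = qop (qop r (e 0)) (e 1).
  by elim=> [|k IH] //; rewrite Uconst.
case: Hrel => _ _ _ Hr' Hr.
rewrite H -(H q) ec // ec // -Hr'.
by rewrite -Hr.
Qed.

Lemma r_e j : qop r (e j) = r'.
Proof.
have H : forall k, qop r (e k) = qop r (e 0).
  elim=> [|k IH] //; rewrite -IH.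
  by rewrite -{1}(Ur k) Hinv.
case: Hrel => _ _ _ Hr' _.
by rewrite H -(H q) ec // -Hr'.
Qed.

Lemma r'_e j : qop r' (e j) = r.
Proof. by rewrite -(r_e j) Hinv. Qed.

Lemma E_r' (a : ZZ) : qop (E a) r' = E (a + hh q).
Proof.
rewrite -(r_e q) F3 -(E_nat q) -/(hh q) E_dih E_r E_dih.
congr E; transitivity (a - hh q); first ring.
by rewrite hhN.
Qed.

Lemma r'_r : qop r' r = r'.
Proof. by rewrite -{1}(r_e q) qdistr qidem e_rho' r_e. Qed.

Lemma r_r' : qop r r' = r.
Proof. by rewrite -{1}(r_e q) F3 (r_e q) r'_r r'_e. Qed.

Definition be (x : Xq q0) : Q :=
  match x with inl k => E k | inr b => if b then r' else r end.

Lemma be_hom : quandle_hom be.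
Proof.
move=> [a|s] [b|t] /=.
- by rewrite E_dih.
- by case: t; rewrite ?E_r ?E_r'.
- by case: s => /=; rewrite /E ?r_e ?r'_e.
- by case: s; case: t => /=; rewrite ?qidem ?r_r' ?r'_r.
Qed.

Lemma Q_iso : is_Q2_T2qA q c r r' ->
  exists (al : Q -> Xq q0) (be : Xq q0 -> Q),
    [/\ quandle_hom al, quandle_hom be, forall x, al (be x) = x & forall x, be (al x) = x].
Proof.
case=> _ _ Hu.
have [[al [hal Hc Har Har']] _] := Hu (Xq q0) (dX q0) (inr false) (inr true) (@Xinvol q q0) (@Xrels q q0).
have [_ Huq] := Hu Q c r r' Hinv Hrel.
have al_e : forall j, al (e j) = inl (j%:R).
  elim/ind2 => [||j IH1 IH2].
  - exact: Hc.
  - exact: Hc.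
  - rewrite eS2 hal IH1 IH2 /=; congr inl.
    rewrite -[j.+2]addn2 -[j.+1]addn1 !natrD; ring.
have al_E : forall k, al (E k) = inl k.
  by move=> k; rewrite /E al_e natr_Zp.
exists al, be; split => //.
- exact: be_hom.
- by case=> [k|[]] /=; rewrite ?al_E.
- move=> x.
  have := Huq (be \o al) id _ _ _ _ _ x; apply.
  + by move=> y z /=; rewrite hal be_hom.
  + by [].
  + by move=> j Hj /=; rewrite Hc // /= E_nat ec.
  + by rewrite /= Har.
  + by rewrite /= Har'.
Qed.
End QSide.


Section Closure.
Variable Q : quandle.

Lemma inn_comp (f g : Q -> Q) : inn_elt f -> inn_elt g -> inn_elt (f \o g).
Proof.
move=> Hf Hg; elim: Hf => [|x f' _ IH|x f' _ IH]; first exact: Hg.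
- exact: (inn_S x IH).
- exact: (inn_Sinv x IH).
Qed.

Lemma inn_iter (R F : Q -> Q) : inn_elt R -> inn_elt F ->
  forall i j, inn_elt (fun z => iter i R (iter j F z)).
Proof.
move=> HR HF; elim=> [|i IH] j /=.
  elim: j => [|j IHj] /=; first exact: inn_id.
  exact: (inn_comp HF IHj).
exact: (inn_comp HR (IH j)).
Qed.

Lemma trans_comp (f g : Q -> Q) : trans_elt f -> trans_elt g -> trans_elt (f \o g).
Proof.
move=> Hf Hg; elim: Hf => [|x y f' _ IH|x y f' _ IH]; first exact: Hg.
- exact: (trans_gen x y IH).
- exact: (trans_geninv x y IH).
Qed.

Lemma trans_iter (R F : Q -> Q) : trans_elt R -> trans_elt F ->
  forall i j, trans_elt (fun z => iter i R (iter j F z)).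
Proof.
move=> HR HF; elim=> [|i IH] j /=.
  elim: j => [|j IHj] /=; first exact: trans_id.
  exact: (trans_comp HF IHj).
exact: (trans_comp HR (IH j)).
Qed.
End Closure.

Section XGroups.
Variable q : nat.
Hypothesis q0 : (0 < q)%N.
Local Open Scope ring_scope.
Local Notation ZZ := 'Z_(2*q).
Local Notation X := (Xq q0).

Definition Mx (b : bool) (t : ZZ) (x : X) : X :=
  match x with inl a => inl ((if b then - a else a) + t) | inr s => inr (addb s b) end.

Lemma Mx_comp b t b' t' x :
  Mx b t (Mx b' t' x) = Mx (addb b b') ((if b then - t' else t') + t) x.
Proof.
case: x => [a|s] /=.
- by congr inl; case: b; case: b' => /=; ring.
- by congr inr; case: b; case: b'; case: s.
Qed.

Lemma Mx_id x : Mx false 0 x = x.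
Proof. by case: x => [a|s] /=; rewrite ?addr0 ?addbF. Qed.

Lemma S_inl a : S (inl a : X) =1 Mx true (a *+ 2).
Proof. by case=> [b|s] /=; [congr inl; ring | rewrite addbT]. Qed.

Lemma S_inr t : S (inr t : X) =1 Mx false (hh q).
Proof. by case=> [b|s] /=; rewrite ?addbF. Qed.

Lemma Sinv_S (x : X) : Sinv x =1 S x.
Proof. by []. Qed.

Lemma Mx_inj b t b' t' : Mx b t =1 Mx b' t' -> b = b' /\ t = t'.
Proof.
move=> H; have := H (inr false); have := H (inl 0) => /=.
by rewrite oppr0 !if_same !add0r => -[->] [->].
Qed.

Lemma iterR i t x : iter i (Mx false t) x = Mx false (t *+ i) x.
Proof.
elim: i => [|i IH] /=; first by rewrite Mx_id.
by rewrite IH Mx_comp /= mulrSr addrC.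
Qed.

Lemma RF u v i (b : bool) x :
  iter i (Mx false u) (iter b (Mx true v) x) = Mx b ((if b then v else 0) + u *+ i) x.
Proof.
rewrite iterR; case: b => /=; first by rewrite Mx_comp.
by rewrite add0r.
Qed.

Lemma realizeX (n : nat) (u v : ZZ) (P : (X -> X) -> Prop) :
  (1 < n)%N -> u *+ n = 0 ->
  (forall i k, (i < n)%N -> (k < n)%N -> u *+ i = u *+ k -> i = k) ->
  (forall i j, P (fun z => iter i (Mx false u) (iter j (Mx true v) z))) ->
  (forall f, P f -> exists b i, f =1 Mx b ((if b then v else 0) + u *+ i)) ->
  perm_subgroup_isog P ('D_(2 * n)).
Proof.
move=> n1 un uinj Pin Pall.
have unm : u *+ n.-1 = - u.
  by apply/eqP; rewrite -subr_eq0 opprK -mulrSr prednK ?un // ltnW.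
apply: (dihedral_realize (R := Mx false u) (F := Mx true v)) => //.
- by move=> z; rewrite iterR un Mx_id.
- by move=> z; rewrite Mx_comp /= addNr Mx_id.
- by move=> z; rewrite iterR !Mx_comp /= unm addrC.
- move=> i j k l Hi Hk Hj Hl H.
  have HH : forall (b b' : bool), (forall z, iter i (Mx false u) (iter b (Mx true v) z) =
        iter k (Mx false u) (iter b' (Mx true v) z)) -> b = b' /\ i = k.
    move=> b b' H'.
    have [Eb Et] := Mx_inj (fun z => etrans (esym (RF u v i b z)) (etrans (H' z) (RF u v k b' z))).
    by subst b'; move: Et => /addrI /uinj ->.
  case: j Hj H => [|[|//]] _ H; case: l Hl H => [|[|//]] _ H.
  + by have [_ ->] := HH false false H.
  + by have [] := HH false true H.
  + by have [] := HH true false H.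
  + by have [_ ->] := HH true true H.
- move=> f /Pall [b [i Hf]]; exists i, b => z.
  by rewrite Hf RF.
Qed.
End XGroups.


Section XGroups2.
Variable q : nat.
Hypothesis q0 : (0 < q)%N.
Local Open Scope ring_scope.
Local Notation ZZ := 'Z_(2*q).
Local Notation X := (Xq q0).

Lemma natZ_inj (m n i k : nat) : (0 < m)%N -> (m * n = 2 * q)%N -> (i < n)%N -> (k < n)%N ->
  (m%:R : ZZ) *+ i = m%:R *+ k -> i = k.
Proof.
move=> m0 Hmn Hi Hk; rewrite -!mulrnA => /(congr1 (@nat_of_ord _)).
rewrite !val_Zp_nat ?p1 // !modn_small -?Hmn ?ltn_pmul2l //.
by move/eqP; rewrite eqn_mul2l (negbTE (lt0n_neq0 m0)) => /eqP.
Qed.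

Lemma Mx_nat (t : ZZ) : t *+ 2 = (2%:R : ZZ) *+ (val t).
Proof. by rewrite -[in LHS](natr_Zp t) -!mulrnA (mulnC (nat_of_ord t)). Qed.

Lemma inn_S' (x : X) : inn_elt (S x).
Proof. exact: (inn_S x (@inn_id _)). Qed.

Definition hb (w : bool) : ZZ := if w then hh q else 0.
Lemma hbadd x y : hb x + hb y = hb (addb x y).
Proof. by case: x; case: y; rewrite /hb /= ?addr0 ?add0r ?hh2. Qed.
Lemma hbN x : - hb x = hb x.
Proof. by case: x; rewrite /hb ?hhN ?oppr0. Qed.

Definition par w b (t : ZZ) := exists a : ZZ, t = hb (addb b w) + a *+ 2.

Lemma par_comp w b t w' b' t' : par w b t -> par w' b' t' ->
  par (addb w w') (addb b b') ((if b then - t' else t') + t).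
Proof.
move=> [a ->] [a' ->]; exists ((if b then - a' else a') + a).
rewrite (_ : addb (addb b b') (addb w w') = addb (addb b w) (addb b' w')); last first.
  by case: b; case: b'; case: w; case: w'.
move: (addb b w) (addb b' w') => X X'.
rewrite -hbadd; case: b => /=; last by ring.
rewrite opprD hbN; ring.
Qed.

Lemma S_par (x : X) : exists b t, S x =1 Mx b t /\ par true b t.
Proof.
case: x => [a|s].
- exists true, (a *+ 2); split; first exact: S_inl.
  by exists a; rewrite /hb /= add0r.
- exists false, (hh q); split; first exact: S_inr.
  by exists 0; rewrite /hb /= mul0rn addr0.
Qed.

Lemma transX : (2 < q)%N -> perm_subgroup_isog (@trans_elt X) ('D_(2 * q)).
Proof.
move=> q2.
apply: (@realizeX q q0 q 2%:R (hh q)) => //.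
- by apply: ltnW.
- by rewrite -mulrnA pchar_Zp ?p1.
- by move=> i k Hi Hk; apply: (natZ_inj (m := 2)).
- apply: trans_iter.
  + rewrite (_ : Mx false 2%:R = S (inl 1 : X) \o Sinv (inl 0 : X)).
      exact: (trans_gen _ _ (@trans_id _)).
    apply: functional_extensionality => z; rewrite /comp.
    by rewrite (Sinv_S _ z) S_inl S_inl Mx_comp /= mul0rn oppr0 add0r.
  + rewrite (_ : Mx true (hh q) = S (inr false : X) \o Sinv (inl 0 : X)).
      exact: (trans_gen _ _ (@trans_id _)).
    apply: functional_extensionality => z; rewrite /comp.
    by rewrite (Sinv_S _ z) S_inr S_inl Mx_comp /= mul0rn add0r.
- move=> f Hf.
  have : exists b t, f =1 Mx b t /\ par false b t.
    elim: Hf => [|x y g _ [b [t [Hg Hp]]]|x y g _ [b [t [Hg Hp]]]].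
    + exists false, 0; split; first by move=> z; rewrite Mx_id.
      by exists 0; rewrite /hb /= mul0rn addr0.
    + have [bx [tx [Hx Px]]] := S_par x; have [by_ [ty [Hy Py]]] := S_par y.
      eexists; eexists; split.
        by move=> z; rewrite /comp Hg (Sinv_S _ (Mx b t z)) Hy Hx !Mx_comp.
      exact: (par_comp (par_comp Px Py) Hp).
    + have [bx [tx [Hx Px]]] := S_par y; have [by_ [ty [Hy Py]]] := S_par x.
      eexists; eexists; split.
        by move=> z; rewrite /comp Hg (Sinv_S _ (Mx b t z)) Hy Hx !Mx_comp.
      exact: (par_comp (par_comp Px Py) Hp).
  move=> [b [t [Hf' [a Ht]]]]; exists b, (val a) => z.
  by rewrite Hf' Ht -Mx_nat addbF.
Qed.

Lemma innX (m : nat) : (2 < q)%N -> (m = 1%N /\ odd q) \/ (m = 2%N /\ ~~ odd q) ->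
  perm_subgroup_isog (@inn_elt X) ('D_(2 * (2 * q %/ m))).
Proof.
move=> q2 Hm.
have [m0 m2 mq] : [/\ (0 < m)%N, (m <= 2)%N & (m %| 2 * q)%N].
  by case: Hm => [[-> _]|[-> Hq]]; rewrite ?dvd1n // dvdn_mulr.
set n := (2 * q %/ m)%N.
have Hmn : (m * n = 2 * q)%N by rewrite /n mulnC divnK.
have n1 : (1 < n)%N.
  rewrite ltnNge; apply/negP => Hn.
  have : (m * n <= 2 * 1)%N by apply: leq_mul.
  rewrite Hmn; lia.
pose u : ZZ := m%:R.
have un : u *+ n = 0 by rewrite -mulrnA Hmn pchar_Zp ?p1.
have unm : u *+ n.-1 = - u.
  by apply/eqP; rewrite -subr_eq0 opprK -mulrSr prednK ?un // ltnW.
have Sx : forall x : X, exists b i, S x =1 Mx b (u *+ i).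
  rewrite /u; case: Hm => [[-> Hq]|[-> Hq]] [a|s].
  - exists true, (val a * 2)%N => z; rewrite S_inl; congr (Mx _ _ z).
    by rewrite -[in LHS](natr_Zp a) -!mulrnA mul1n.
  - by exists false, q => z; rewrite S_inr; congr (Mx _ _ z).
  - exists true, (val a) => z; rewrite S_inl; congr (Mx _ _ z).
    exact: Mx_nat.
  - exists false, q./2 => z; rewrite S_inr; congr (Mx _ _ z).
    rewrite /hh -!mulrnA mul2n; congr (_ *+ _).
    by rewrite -[in LHS](odd_double_half q) (negbTE Hq) mul2n.
apply: (@realizeX q q0 n u 0) => //.
- by move=> i k Hi Hk; apply: (natZ_inj m0 Hmn).
- apply: inn_iter.
  + case: Hm => [[Em Hq]|[Em Hq]].
    * pose a : ZZ := (q.+1./2)%:R.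
      have Ea : a *+ 2 + hh q = 1.
        rewrite /a /hh -mulrnA.
        have -> : (q.+1./2 * 2 = q.+1)%N.
          by have := odd_double_half q.+1; rewrite /= Hq add0n -muln2.
        rewrite -natrD (_ : (q.+1 + q = 1 + 2 * q)%N); last by lia.
        by rewrite natrD pchar_Zp ?p1 // addr0.
      have -> : Mx false u = S (inr false : X) \o (S (inl a : X) \o S (inl 0 : X)).
        apply: functional_extensionality => z; rewrite /comp.
        rewrite S_inl S_inl S_inr !Mx_comp /=; congr (Mx _ _ z).
        by rewrite mul0rn oppr0 add0r Ea /u Em.
      exact: (inn_comp (inn_S' _) (inn_comp (inn_S' _) (inn_S' _))).
    * have -> : Mx false u = S (inl 1 : X) \o S (inl 0 : X).
        apply: functional_extensionality => z; rewrite /comp.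
        by rewrite S_inl S_inl Mx_comp /= mul0rn oppr0 add0r /u Em.
      exact: (inn_comp (inn_S' _) (inn_S' _)).
  + rewrite (_ : Mx true 0 = S (inl 0 : X)); first exact: inn_S'.
    apply: functional_extensionality => z.
    by rewrite S_inl mul0rn.
- move=> f Hf.
  have : exists b i, f =1 Mx b (u *+ i).
    elim: Hf => [|x g _ [b [i Hg]]|x g _ [b [i Hg]]].
    + by exists false, 0%N => z; rewrite mulr0n Mx_id.
    + have [bx [ix Hx]] := Sx x.
      exists (addb bx b), ((if bx then n.-1 * i else i) + ix)%N => z.
      rewrite /comp Hg Hx Mx_comp; congr (Mx _ _ z).
      by case: bx Hx => _; rewrite mulrnDr // mulrnA unm mulNrn.
    + have [bx [ix Hx]] := Sx x.
      exists (addb bx b), ((if bx then n.-1 * i else i) + ix)%N => z.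
      rewrite /comp Hg (Sinv_S _ (Mx b (u *+ i) z)) Hx Mx_comp; congr (Mx _ _ z).
      by case: bx Hx => _; rewrite mulrnDr // mulrnA unm mulNrn.
  move=> [b [i Hb]]; exists b, i => z.
  by rewrite if_same add0r Hb.
Qed.
End XGroups2.


Theorem mainTheorem4 (q : nat) (Q : quandle) (c : nat -> Q) (r r' : Q) :
  2 < q -> is_Q2_T2qA q c r r' ->
  perm_subgroup_isog (@inn_elt Q) ('D_(2 * (2 * q %/ gcdn 2 q)))%type /\
  perm_subgroup_isog (@trans_elt Q) ('D_(2 * q))%type.
Proof.
move=> q2 H.
have q0 : 0 < q by apply: leq_trans q2.
have [Hinv Hrel _] := H.
have [al [be [hal hbe ab ba]]] := Q_iso q0 Hinv Hrel H.
split.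
- apply: (isog_transport ab ba).
  + by move=> h; apply: (inn_transport hbe ba).
  + by move=> h; apply: (inn_transport hal ab).
  apply: (innX q0 q2).
  case: (boolP (odd q)) => Hq; [left | right]; split => //.
  + by apply/eqP; rewrite -/(coprime 2 q) coprime2n.
  + by apply/gcdn_idPl; rewrite dvdn2.
- apply: (isog_transport ab ba).
  + by move=> h; apply: (trans_transport hbe ba).
  + by move=> h; apply: (trans_transport hal ab).
  exact: (transX q0 q2).
Qed.
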